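(* Let $(H,B_1,B_2)$ be a Rota-Baxter system of Hopf algebras with descendent Hopf algebra $H_{B_1,B_2}$, let $A$ be a unital commutative algebra, and let $\mathcal{B}_1,\mathcal{B}_2:\mathrm{Char}(H,A)\to\mathrm{Char}(H_{B_1,B_2},A)$ be given by $\mathcal{B}_i(f)(a)=f(B_i(a))$, $a\in H_1$. Then $\mathcal{B}_1(\ker\mathcal{B}_2)$ is a normal subgroup of $\operatorname{Im}(\mathcal{B}_1)$ and $\mathcal{B}_2(\ker\mathcal{B}_1)$ is a normal subgroup of $\operatorname{Im}(\mathcal{B}_2)$.
   Context: $\mathbb{F}$ is a field of characteristic $0$; Sweedler notation $\Delta(a)=a_1\otimes a_2$. A Rota-Baxter system of Hopf algebras is a triple $(H,B_1,B_2)$ with $(H,\cdot,1,\Delta,\epsilon,S)$ a cocommutative Hopf algebra, $B_1,B_2$ coalgebra homomorphisms with $B_1(1)=B_2(1)=1$, and for all $a,b\in H$: $B_1(a)B_1(b)=B_1(B_1(a_1)bS(B_2(a_2)))$, $B_2(a)B_2(b)=B_2(B_1(a_1)bS(B_2(a_2)))$. Descendent operation $a\circ b=B_1(a_1)bS(B_2(a_2))$, cocycle $\sigma(a)=B_1(a_1)S(B_2(a_2))$, $H_1=\operatorname{Im}(\sigma)$; $H_{B_1,B_2}$ is the Hopf algebra $H_1$ with product $\circ$, unit $1$, restricted $\Delta,\epsilon$, antipode $T(a)=S(B_1(a_1))B_2(a_2)$. Convolution: $(f\ast g)(a)=f(a_1)g(a_2)$. $\mathrm{Char}(H,A)$ is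 the group under $\ast$ of algebra homomorphisms $H\to A$; $\mathrm{Char}(H_{B_1,B_2},A)$ is the group under convolution (w.r.t. the coproduct of $H_1$) of algebra homomorphisms $(H_1,\circ,1)\to A$. *)

(* Defs.v *)
(* An element of H (x) H is represented by a finite list of pairs
   [:: (u_1, v_1); ...] standing for sum_i u_i (x) v_i, and all statements
   about such tensors are made through bilinear (resp. trilinear) maps,
   i.e. through the universal property of the tensor product.  All
   expressions built from the coproduct below (convolution, the descendent
   operation, sigma, T, ...) are bilinear in the Sweedler components, hence
   independent of the chosen representation. *)
From HB Require Import structures.
From mathcomp Require Import all_boot all_order all_algebra.
Set Implicit Arguments. Unset Strict Implicit. Unset Printing Implicit Defensive.
Import GRing.Theory.
Local Open Scope ring_scope.

Section Hopf.
Variable F : fieldType.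
Variable H : algType F.

Definition linmap (V : lmodType F) (f : H -> V) : Prop :=
  forall (a : F) (x y : H), f (a *: x + y) = a *: f x + f y.

Definition bilin (V : lmodType F) (b : H -> H -> V) : Prop :=
  (forall z, linmap (fun x => b x z)) /\ (forall x, linmap (b x)).

Definition trilin (V : lmodType F) (g : H -> H -> H -> V) : Prop :=
  [/\ forall y z, linmap (fun x => g x y z),
      forall x z, linmap (fun y => g x y z) &
      forall x y, linmap (g x y)].

Definition tsum (V : lmodType F) (b : H -> H -> V) (s : seq (H * H)) : V :=
  \sum_(p <- s) b p.1 p.2.

Variable cop : H -> seq (H * H).
Variable eps : H -> F.
Variable S : H -> H.

Record cocomm_hopf : Prop := {
  cop_lin : forall (V : lmodType F) (b : H -> H -> V), bilin b ->
    forall a x y, tsum b (cop (a *: x + y)) = a *: tsum b (cop x) + tsum b (cop y);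
  cop_coassoc : forall (V : lmodType F) (g : H -> H -> H -> V), trilin g ->
    forall x, \sum_(p <- cop x) \sum_(q <- cop p.1) g q.1 q.2 p.2
            = \sum_(p <- cop x) \sum_(q <- cop p.2) g p.1 q.1 q.2;
  eps_lin : forall a x y, eps (a *: x + y) = a * eps x + eps y;
  counit_l : forall x, \sum_(p <- cop x) eps p.1 *: p.2 = x;
  counit_r : forall x, \sum_(p <- cop x) eps p.2 *: p.1 = x;
  cop_mul : forall (V : lmodType F) (b : H -> H -> V), bilin b ->
    forall x y, tsum b (cop (x * y))
              = \sum_(p <- cop x) \sum_(q <- cop y) b (p.1 * q.1) (p.2 * q.2);
  cop_one : forall (V : lmodType F) (b : H -> H -> V), bilin b ->
    tsum b (cop 1) = b 1 1;
  eps_mul : forall x y, eps (x * y) = eps x * eps y;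
  eps_one : eps 1 = 1;
  S_lin : linmap S;
  antipode_l : forall x, \sum_(p <- cop x) S p.1 * p.2 = eps x *: 1;
  antipode_r : forall x, \sum_(p <- cop x) p.1 * S p.2 = eps x *: 1;
  cop_cocomm : forall (V : lmodType F) (b : H -> H -> V), bilin b ->
    forall x, tsum b (cop x) = tsum (fun u v => b v u) (cop x)
}.

Definition coalg_hom (B : H -> H) : Prop :=
  [/\ linmap B,
      (forall (V : lmodType F) (b : H -> H -> V), bilin b ->
         forall x, tsum b (cop (B x)) = tsum (fun u v => b (B u) (B v)) (cop x)) &
      forall x, eps (B x) = eps x].

Variables B1 B2 : H -> H.

Definition circ (a b : H) : H := \sum_(p <- cop a) B1 p.1 * b * S (B2 p.2).

(* cocycle sigma(a) = B1(a_1) S(B2(a_2)) and H_1 = Im sigma *)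
Definition sigma (a : H) : H := \sum_(p <- cop a) B1 p.1 * S (B2 p.2).
Definition inH1 (x : H) : Prop := exists a, x = sigma a.

(* antipode of H_{B1,B2}: T(a) = S(B1(a_1)) B2(a_2) *)
Definition Tant (a : H) : H := \sum_(p <- cop a) S (B1 p.1) * B2 p.2.

Record RB_system : Prop := {
  RB_hopf : cocomm_hopf;
  RB_B1_coalg : coalg_hom B1;
  RB_B2_coalg : coalg_hom B2;
  RB_B1_one : B1 1 = 1;
  RB_B2_one : B2 1 = 1;
  RB_eq1 : forall a b, B1 a * B1 b = B1 (circ a b);
  RB_eq2 : forall a b, B2 a * B2 b = B2 (circ a b)
}.

Variable A : comAlgType F.

Definition isChar (f : H -> A) : Prop :=
  [/\ linmap f, forall x y, f (x * y) = f x * f y & f 1 = 1].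

(* convolution (w.r.t. the coproduct; on H_1 this is the restricted one) *)
Definition conv (f g : H -> A) : H -> A :=
  fun x => \sum_(p <- cop x) f p.1 * g p.2.

Definition unitA : H -> A := fun x => eps x *: 1.

(* equality of maps on H_1 (elements of Char(H_{B1,B2}, A) live on H_1) *)
Definition eqOn1 (phi psi : H -> A) : Prop := forall x, inH1 x -> phi x = psi x.

Definition calB (B : H -> H) (f : H -> A) : H -> A := fun x => f (B x).

Definition invB (phi : H -> A) : H -> A := fun x => phi (Tant x).

Definition inKer (Bj : H -> H) (f : H -> A) : Prop :=
  isChar f /\ eqOn1 (calB Bj f) unitA.

Definition image_of_ker_normal (Bi Bj : H -> H) : Prop :=
  [/\
      (forall f, inKer Bj f -> exists g, isChar g /\ eqOn1 (calB Bi f) (calB Bi g)),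
      (exists f, inKer Bj f /\ eqOn1 (calB Bi f) unitA),
      (forall f g, inKer Bj f -> inKer Bj g ->
         exists h, inKer Bj h /\ eqOn1 (calB Bi h) (conv (calB Bi f) (calB Bi g))),
      (forall f, inKer Bj f ->
         exists h, inKer Bj h /\ eqOn1 (calB Bi h) (invB (calB Bi f))) &
      (forall g f, isChar g -> inKer Bj f ->
         exists h, inKer Bj h /\
           eqOn1 (calB Bi h)
                 (conv (conv (calB Bi g) (calB Bi f)) (invB (calB Bi g))))].

End Hopf.

(* Main.v *)
Require Import Defs.
From HB Require Import structures.
From mathcomp Require Import all_boot all_order all_algebra.
Set Implicit Arguments. Unset Strict Implicit. Unset Printing Implicit Defensive.
Import GRing.Theory.
Local Open Scope ring_scope.

Section Lin.
Variables (F : fieldType) (H : algType F).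

Lemma lin0 (V : lmodType F) (f : H -> V) : linmap f -> f 0 = 0.
Proof.
move=> hf; have h := hf 1 0 0; rewrite !scale1r addr0 in h.
have : f 0 + f 0 = f 0 + 0 by rewrite addr0 -h.
by move/addrI.
Qed.

Lemma linD (V : lmodType F) (f : H -> V) : linmap f -> forall x y, f (x + y) = f x + f y.
Proof. by move=> hf x y; have := hf 1 x y; rewrite !scale1r. Qed.

Lemma linZ (V : lmodType F) (f : H -> V) : linmap f -> forall a x, f (a *: x) = a *: f x.
Proof. by move=> hf a x; have := hf a x 0; rewrite addr0 (lin0 hf) addr0. Qed.

Lemma linS (V : lmodType F) (f : H -> V) (I : Type) (r : seq I) (G : I -> H) :
  linmap f -> f (\sum_(i <- r) G i) = \sum_(i <- r) f (G i).
Proof.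
move=> hf; elim: r => [|i r IH]; first by rewrite !big_nil (lin0 hf).
by rewrite !big_cons linD // IH.
Qed.

Lemma lin_sum (V : lmodType F) (I : Type) (r : seq I) (G : I -> H -> V) :
  (forall i, linmap (G i)) -> linmap (fun x => \sum_(i <- r) G i x).
Proof.
move=> hG a x y; rewrite scaler_sumr -big_split /=.
by apply: eq_bigr => i _; rewrite hG.
Qed.

Lemma lin_comp (V : lmodType F) (f : H -> V) (g : H -> H) :
  linmap f -> linmap g -> linmap (fun x => f (g x)).
Proof. by move=> hf hg a x y; rewrite hg hf. Qed.

End Lin.

Ltac linsimp :=
  rewrite ?(mulrDl, mulrDr, =^~scalerAl, =^~scalerAr, scalerDr, scalerA).

Section Hopf.
Variables (F : fieldType) (H : algType F) (cop : H -> seq (H * H)) (eps : H -> F) (S : H -> H).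
Hypothesis hopf : cocomm_hopf cop eps S.

Lemma eps_add x y : eps (x + y) = eps x + eps y.
Proof. by have := eps_lin hopf 1 x y; rewrite scale1r mul1r. Qed.
Lemma eps0 : eps 0 = 0.
Proof.
have h := eps_add 0 0; rewrite addr0 in h.
have : eps 0 + eps 0 = eps 0 + 0 by rewrite addr0 -h.
by move/addrI.
Qed.
Lemma epsZ a x : eps (a *: x) = a * eps x.
Proof. by have := eps_lin hopf a x 0; rewrite addr0 eps0 addr0. Qed.
Lemma eps_sum (I : Type) (r : seq I) (G : I -> H) :
  eps (\sum_(i <- r) G i) = \sum_(i <- r) eps (G i).
Proof.
elim: r => [|i r IH]; first by rewrite !big_nil eps0.
by rewrite !big_cons eps_add IH.
Qed.

Lemma tsum_lin (V : lmodType F) (b : H -> H -> V) : bilin b -> linmap (fun x => tsum b (cop x)).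
Proof. by move=> hb a x y; apply: (cop_lin hopf hb). Qed.

Lemma eps_S x : eps (S x) = eps x.
Proof.
have h := antipode_l hopf x.
have := congr1 eps h; rewrite eps_sum epsZ (eps_one hopf) mulr1 => <-.
rewrite -{1}(counit_r hopf x) (linS _ _ (S_lin hopf)) eps_sum.
by apply: eq_bigr => p _; rewrite (linZ (S_lin hopf)) epsZ (eps_mul hopf) mulrC.
Qed.

Lemma S1 : S 1 = 1.
Proof.
have h := antipode_l hopf 1.
have hb : bilin (fun u v : H => S u * v).
  split=> [z|x] a u v /=; rewrite ?(S_lin hopf); linsimp => //.
have e := cop_one hopf hb; rewrite /tsum /= in e.
by rewrite e (eps_one hopf) scale1r mulr1 in h.
Qed.

Lemma bilin_mul (R : algType F) (phi psi : H -> R) :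
  linmap phi -> linmap psi -> bilin (fun u v => phi u * psi v).
Proof. by move=> h1 h2; split=> [z|x] a u v /=; rewrite ?h1 ?h2; linsimp. Qed.

Variable A : comAlgType F.
Notation conv := (@conv _ _ cop A).
Notation unitA := (unitA eps A).

Lemma conv_lin (phi psi : H -> A) : linmap phi -> linmap psi -> linmap (conv phi psi).
Proof. by move=> h1 h2; apply: (tsum_lin (bilin_mul h1 h2)). Qed.

Lemma conv_ext (phi phi' psi psi' : H -> A) :
  (forall x, phi x = phi' x) -> (forall x, psi x = psi' x) ->
  forall x, conv phi psi x = conv phi' psi' x.
Proof. by move=> e1 e2 x; apply: eq_bigr => p _; rewrite e1 e2. Qed.

Lemma conv_unitr (phi : H -> A) : linmap phi -> forall x, conv phi unitA x = phi x.
Proof.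
move=> h x; rewrite -[in RHS](counit_r hopf x) (linS _ _ h).
by apply: eq_bigr => p _; rewrite (linZ h) /unitA -scalerAr mulr1.
Qed.

Lemma conv_unitl (phi : H -> A) : linmap phi -> forall x, conv unitA phi x = phi x.
Proof.
move=> h x; rewrite -[in RHS](counit_l hopf x) (linS _ _ h).
by apply: eq_bigr => p _; rewrite (linZ h) /unitA -scalerAl mul1r.
Qed.

Lemma conv_assoc (phi psi chi : H -> A) : linmap phi -> linmap psi -> linmap chi ->
  forall x, conv (conv phi psi) chi x = conv phi (conv psi chi) x.
Proof.
move=> h1 h2 h3 x.
have ht : trilin (fun u v w => phi u * psi v * chi w).
  by split=> [y z|y z|y z] a u v /=; rewrite ?h1 ?h2 ?h3; linsimp.
have := cop_coassoc hopf ht x => e.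
rewrite /Defs.conv.
transitivity (\sum_(p <- cop x) \sum_(q <- cop p.1) phi q.1 * psi q.2 * chi p.2).
  by apply: eq_bigr => p _; rewrite mulr_suml.
rewrite e; apply: eq_bigr => p _; rewrite mulr_sumr.
by apply: eq_bigr => q _; rewrite mulrA.
Qed.

Lemma conv_B (B : H -> H) (phi psi : H -> A) : coalg_hom cop eps B ->
  linmap phi -> linmap psi ->
  forall x, conv (fun y => phi (B y)) (fun y => psi (B y)) x = conv phi psi (B x).
Proof.
case=> hB hc _ h1 h2 x.
by have := hc _ _ (bilin_mul h1 h2) x; rewrite /tsum /= => e; rewrite /Defs.conv e.
Qed.

Lemma unitA_char : isChar unitA.
Proof.
split.
- by move=> a x y; rewrite /unitA (eps_lin hopf) scalerDl scalerA.
- by move=> x y; rewrite /unitA (eps_mul hopf) -scalerAl mul1r scalerA.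
- by rewrite /unitA (eps_one hopf) scale1r.
Qed.

Lemma conv_char (f g : H -> A) : isChar f -> isChar g -> isChar (conv f g).
Proof.
case=> hf mf f1 [hg mg g1]; split.
- exact: conv_lin.
- move=> x y.
  have := cop_mul hopf (bilin_mul hf hg) x y; rewrite /tsum /= => e.
  rewrite /Defs.conv e mulr_suml; apply: eq_bigr => p _; rewrite mulr_sumr.
  apply: eq_bigr => q _; rewrite mf mg.
  by rewrite -!mulrA; congr (_ * _); rewrite mulrCA.
- have := cop_one hopf (bilin_mul hf hg); rewrite /tsum /= => e.
  by rewrite /Defs.conv e f1 g1 mulr1.
Qed.

Lemma conv_antipode_r (f : H -> A) : isChar f -> forall x, conv f (fun y => f (S y)) x = unitA x.
Proof.
case=> hf mf f1 x; rewrite /Defs.conv.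
transitivity (f (\sum_(p <- cop x) p.1 * S p.2)).
  by rewrite (linS _ _ hf); apply: eq_bigr => p _; rewrite mf.
by rewrite (antipode_r hopf) (linZ hf) f1.
Qed.

Lemma conv_antipode_l (f : H -> A) : isChar f -> forall x, conv (fun y => f (S y)) f x = unitA x.
Proof.
case=> hf mf f1 x; rewrite /Defs.conv.
transitivity (f (\sum_(p <- cop x) S p.1 * p.2)).
  by rewrite (linS _ _ hf); apply: eq_bigr => p _; rewrite mf.
by rewrite (antipode_l hopf) (linZ hf) f1.
Qed.


Section Char.
Variable f : H -> A.
Hypothesis fc : isChar f.
Let hf : linmap f. Proof. by case: fc. Qed.
Let mf : forall x y, f (x * y) = f x * f y. Proof. by case: fc. Qed.
Let f1 : f 1 = 1. Proof. by case: fc. Qed.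
Let fs := fun y => f (S y).
Let hfs : linmap fs. Proof. exact: lin_comp hf (S_lin hopf). Qed.

Lemma collapse (K : H -> A) : linmap K -> forall x,
  \sum_(p <- cop x) \sum_(r <- cop p.2) fs p.1 * f r.1 * K r.2 =
  \sum_(p <- cop x) eps p.1 *: K p.2.
Proof.
move=> hK x.
have ht : trilin (fun u v w => fs u * f v * K w).
  by split=> [y z|y z|y z] a u v /=; rewrite ?hfs ?hf ?hK; linsimp.
have e := cop_coassoc hopf ht x; rewrite /= in e; rewrite -e.
apply: eq_bigr => p _; rewrite -mulr_suml.
have := conv_antipode_l fc p.1; rewrite /Defs.conv => ->.
by rewrite /Defs.unitA -scalerAl mul1r.
Qed.

Lemma fs_mul x y : fs (x * y) = fs x * fs y.
Proof.
pose L := fun w => \sum_(p <- cop x) eps p.1 *: fs (p.2 * w).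
have hL : linmap L.
  apply: lin_sum => p a u v; rewrite mulrDr -scalerAr hfs.
  by rewrite scalerDr !scalerA mulrC.
pose K := fun w => \sum_(q <- cop y) \sum_(s <- cop q.2) fs q.1 * f s.1 * fs (w * s.2).
have hK : linmap K.
  apply: lin_sum => q; apply: lin_sum => s a u v.
  by rewrite mulrDl -scalerAl hfs; linsimp.
transitivity (\sum_(q <- cop y) eps q.1 *: L q.2).
  transitivity (fs ((\sum_(p <- cop x) eps p.1 *: p.2) * (\sum_(q <- cop y) eps q.1 *: q.2))).
    by rewrite !(counit_l hopf).
  rewrite mulr_suml (linS _ _ hfs).
  rewrite /L; under eq_bigr => p _ do rewrite mulr_sumr (linS _ _ hfs).
  rewrite exchange_big /=; apply: eq_bigr => q _; rewrite scaler_sumr.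
  by apply: eq_bigr => p _; rewrite -scalerAl -scalerAr !(linZ hfs) !scalerA mulrC.
rewrite -(collapse hL).
transitivity (\sum_(p <- cop x) eps p.1 *: K p.2).
  rewrite /L /K.
  under eq_bigr => q _ do under eq_bigr => s _ do rewrite mulr_sumr.
  under eq_bigr => q _ do rewrite exchange_big /=.
  rewrite exchange_big /=; apply: eq_bigr => p _.
  rewrite scaler_sumr; apply: eq_bigr => q _; rewrite scaler_sumr.
  by apply: eq_bigr => s _; rewrite -scalerAr.
rewrite -(collapse hK).
transitivity (\sum_(p <- cop x) \sum_(q <- cop y) fs p.1 * fs q.1 *
    (\sum_(r <- cop p.2) \sum_(s <- cop q.2) f (r.1 * s.1) * fs (r.2 * s.2))).
  apply: eq_bigr => p _; rewrite /K.
  under eq_bigr => r _ do rewrite mulr_sumr.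
  rewrite exchange_big /=; apply: eq_bigr => q _.
  rewrite mulr_sumr; apply: eq_bigr => r _.
  rewrite !mulr_sumr; apply: eq_bigr => s _.
  rewrite mf !mulrA; congr (_ * _).
  by rewrite -!mulrA; congr (_ * _); rewrite mulrCA.
transitivity (\sum_(p <- cop x) \sum_(q <- cop y) fs p.1 * fs q.1 * (eps (p.2 * q.2) *: 1)).
  apply: eq_bigr => p _; apply: eq_bigr => q _; congr (_ * _).
  have e := cop_mul hopf (bilin_mul hf hfs) p.2 q.2; rewrite /tsum /= in e.
  rewrite -e.
  by have := conv_antipode_r fc (p.2 * q.2); rewrite /Defs.conv.
transitivity (fs (\sum_(p <- cop x) eps p.2 *: p.1) * fs (\sum_(q <- cop y) eps q.2 *: q.1)); last by rewrite !(counit_r hopf).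
rewrite !(linS _ _ hfs) mulr_suml.
apply: eq_bigr => p _; rewrite mulr_sumr; apply: eq_bigr => q _.
rewrite (eps_mul hopf) !(linZ hfs) -scalerAr mulr1 -scalerAl -scalerAr scalerA.
by [].
Qed.

Lemma fs_char : isChar fs.
Proof. by split; [exact: hfs | exact: fs_mul | rewrite /fs S1]. Qed.

End Char.

End Hopf.

Section RB.
Variables (F : fieldType) (H : algType F) (cop : H -> seq (H * H)) (eps : H -> F) (S : H -> H).
Variables (B1 B2 : H -> H) (A : comAlgType F).
Hypothesis hopf : cocomm_hopf cop eps S.
Hypotheses (cB1 : coalg_hom cop eps B1) (cB2 : coalg_hom cop eps B2).
Notation T := (Tant cop S B1 B2).
Notation circ := (circ cop S B1 B2).

Let hS := S_lin hopf.
Let hB1 : linmap B1. Proof. by case: cB1. Qed.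
Let hB2 : linmap B2. Proof. by case: cB2. Qed.

Lemma T_lin : linmap T.
Proof.
apply: (tsum_lin hopf (b := fun u v => S (B1 u) * B2 v)).
by split=> [z|x] a u v /=; rewrite ?hB1 ?hB2 ?hS; linsimp.
Qed.

Lemma coalg_antipode (B : H -> H) : coalg_hom cop eps B -> forall z,
  \sum_(s <- cop z) B s.1 * S (B s.2) = eps z *: 1.
Proof.
move=> cB z; have [hB hc he] := cB.
have hb : bilin (fun u v : H => u * S v).
  by split=> [y|y] a u v /=; rewrite ?hS; linsimp.
have := hc _ _ hb z; rewrite /tsum /= => <-.
by rewrite (antipode_r hopf) he.
Qed.

Lemma stepA a : \sum_(p <- cop a) circ p.1 (T p.2) = eps a *: 1.
Proof.
have hT := T_lin.
have ht : trilin (fun x y z => B1 x * T z * S (B2 y)).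
  by split=> [y z|y z|y z] c u v /=; rewrite ?hB1 ?hB2 ?hS ?hT; linsimp.
have e := cop_coassoc hopf ht a; rewrite /= in e.
rewrite /Defs.circ e.
have M : forall y, \sum_(r <- cop y) T r.2 * S (B2 r.1) = S (B1 y).
  move=> y.
  have hb : bilin (fun u v => T v * S (B2 u)).
    by split=> [z|x] c u v /=; rewrite ?hB1 ?hB2 ?hS ?hT; linsimp.
  have := cop_cocomm hopf hb y; rewrite /tsum /= => ->.
  have ht2 : trilin (fun x y z => S (B1 x) * B2 y * S (B2 z)).
    by split=> [y' z|y' z|y' z] c u v /=; rewrite ?hB1 ?hB2 ?hS; linsimp.
  have e2 := cop_coassoc hopf ht2 y; rewrite /= in e2.
  transitivity (\sum_(r <- cop y) \sum_(s <- cop r.1) S (B1 s.1) * B2 s.2 * S (B2 r.2)).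
    by apply: eq_bigr => r _; rewrite /Tant mulr_suml.
  rewrite e2 -[in RHS](counit_r hopf y) (linS _ _ (lin_comp hS hB1)).
  apply: eq_bigr => r _; rewrite (linZ (lin_comp hS hB1)).
  under eq_bigr => s _ do rewrite -mulrA.
  by rewrite -mulr_sumr (coalg_antipode cB2) -scalerAr mulr1.
transitivity (\sum_(p <- cop a) B1 p.1 * S (B1 p.2)).
  apply: eq_bigr => p _; rewrite -M mulr_sumr.
  by apply: eq_bigr => r _; rewrite mulrA.
exact: (coalg_antipode cB1).
Qed.


Section Gen.
Variables (Bi Bj : H -> H).
Hypotheses (cBi : coalg_hom cop eps Bi) (cBj : coalg_hom cop eps Bj).
Hypotheses (Bi1 : Bi 1 = 1) (Bj1 : Bj 1 = 1).
Hypotheses (mBi : forall a b, Bi a * Bi b = Bi (circ a b)).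
Hypotheses (mBj : forall a b, Bj a * Bj b = Bj (circ a b)).
Let hBi : linmap Bi. Proof. by case: cBi. Qed.
Let hBj : linmap Bj. Proof. by case: cBj. Qed.
Notation conv := (@conv _ _ cop A).
Notation unitA := (unitA eps A).

Lemma L3 (Bk : H -> H) : coalg_hom cop eps Bk -> Bk 1 = 1 ->
  (forall a b, Bk a * Bk b = Bk (circ a b)) ->
  forall f : H -> A, isChar f -> forall a, f (Bk (T a)) = f (S (Bk a)).
Proof.
move=> cBk Bk1 mBk f fc a; have [hf mf f1] := fc.
have hBk : linmap Bk by case: cBk.
pose u := fun x => f (Bk x).
pose v := fun x => f (Bk (T x)).
pose w := fun x => f (S (Bk x)).
have hu : linmap u by apply: lin_comp.
have hv : linmap v by apply: lin_comp => //; apply: lin_comp => //; apply: T_lin.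
have hw : linmap w by apply: lin_comp => //; apply: lin_comp.
have uv : forall x, conv u v x = unitA x.
  move=> x; rewrite /Defs.conv /u /v.
  under eq_bigr => p _ do rewrite -mf mBk.
  rewrite -(linS _ _ (lin_comp hf hBk)) stepA (linZ (lin_comp hf hBk)) Bk1 f1.
  by [].
have wu : forall x, conv w u x = unitA x.
  move=> x; rewrite /w /u (conv_B (phi := fun y => f (S y)) cBk) //.
    by rewrite (conv_antipode_l hopf fc) /Defs.unitA; case: cBk => _ _ ->.
  exact: lin_comp.
change (v a = w a).
transitivity (conv unitA v a); first by rewrite (conv_unitl hopf).
transitivity (conv (conv w u) v a); first by apply: conv_ext => // x; rewrite wu.
rewrite (conv_assoc hopf) //.
transitivity (conv w unitA a); first by apply: conv_ext.
exact: (conv_unitr hopf).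
Qed.


Lemma eps_sigma a : eps (sigma cop S B1 B2 a) = eps a.
Proof.
rewrite /sigma (eps_sum hopf) -[in RHS](counit_l hopf a) (eps_sum hopf).
apply: eq_bigr => p _; rewrite (eps_mul hopf) (eps_S hopf) (epsZ hopf).
by case: cB1 => _ _ ->; case: cB2 => _ _ ->.
Qed.

Lemma eps_T a : eps (T a) = eps a.
Proof.
rewrite /Tant (eps_sum hopf) -[in RHS](counit_l hopf a) (eps_sum hopf).
apply: eq_bigr => p _; rewrite (eps_mul hopf) (eps_S hopf) (epsZ hopf).
by case: cB1 => _ _ ->; case: cB2 => _ _ ->.
Qed.

Lemma Bj_sigma a : Bj (sigma cop S B1 B2 a) = Bj a.
Proof.
have -> : sigma cop S B1 B2 a = circ a 1.
  by apply: eq_bigr => p _; rewrite mulr1.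
by rewrite -mBj Bj1 mulr1.
Qed.

Lemma ker_iff (f : H -> A) :
  inKer cop eps S B1 B2 Bj f <-> isChar f /\ forall a, f (Bj a) = unitA a.
Proof.
split.
- case=> fc e; split => // a.
  have := e (sigma cop S B1 B2 a) (ex_intro _ a erefl).
  by rewrite /calB Bj_sigma /Defs.unitA eps_sigma.
- case=> fc e; split => // x [a ->].
  by rewrite /calB Bj_sigma e /Defs.unitA eps_sigma.
Qed.

Lemma main_gen : image_of_ker_normal cop eps S B1 B2 A Bi Bj.
Proof.
have hU : linmap unitA by case: (unitA_char hopf A).
have ecBi : forall x, eps (Bi x) = eps x by case: cBi.
have ecBj : forall x, eps (Bj x) = eps x by case: cBj.
split.
- by move=> f [fc _]; exists f.
- exists unitA; split.
    apply/ker_iff; split; first exact: (unitA_char hopf).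
    by move=> a; rewrite /Defs.unitA ecBj.
  by move=> x _; rewrite /calB /Defs.unitA ecBi.
- move=> f g /ker_iff [fc kf] /ker_iff [gc kg].
  have [hf _ _] := fc; have [hg _ _] := gc.
  exists (conv f g); split.
    apply/ker_iff; split; first exact: (conv_char hopf).
    move=> a; rewrite -(conv_B cBj hf hg) (conv_ext cop kf kg).
    exact: (conv_unitr hopf).
  by move=> x _; rewrite /calB -(conv_B cBi hf hg).
- move=> f /ker_iff [fc kf].
  exists (fun y => f (S y)); split.
    apply/ker_iff; split; first exact: (fs_char hopf).
    by move=> a; rewrite -(L3 cBj Bj1 mBj fc) kf /Defs.unitA eps_T.
  by move=> x _; rewrite /calB /invB /calB (L3 cBi Bi1 mBi fc).
- move=> g f gc /ker_iff [fc kf].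
  have [hf _ _] := fc; have [hg _ _] := gc.
  have gsc := fs_char hopf gc; have [hgs _ _] := gsc.
  have hgf : linmap (conv g f) by apply: (conv_lin hopf).
  exists (conv (conv g f) (fun y => g (S y))); split.
    apply/ker_iff; split; first by apply: (conv_char hopf) => //; apply: (conv_char hopf).
    move=> a; rewrite -(conv_B cBj hgf hgs).
    rewrite (conv_ext cop (phi' := conv (fun y => g (Bj y)) unitA) (psi' := fun y => g (S (Bj y)))) //; last first.
      by move=> y; rewrite -(conv_B cBj hg hf) (conv_ext cop (fun z => erefl) kf).
    rewrite (conv_ext cop (phi' := fun y => g (Bj y)) (psi' := fun y => g (S (Bj y)))) //; last first.
      by move=> y; rewrite (conv_unitr hopf) //; apply: lin_comp.
    rewrite (conv_B cBj hg hgs) (conv_antipode_r hopf gc) /Defs.unitA.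
    by rewrite ecBj.
  move=> x _; rewrite /calB -(conv_B cBi hgf hgs).
  apply: conv_ext => y; first by rewrite -(conv_B cBi hg hf).
  by rewrite /invB /calB (L3 cBi Bi1 mBi gc).
Qed.

End Gen.
End RB.

Unset Implicit Arguments.
Theorem mainTheorem12 (F : fieldType) (charF0 : [pchar F] =i pred0)
  (H : algType F) (cop : H -> seq (H * H)) (eps : H -> F) (S : H -> H)
  (B1 B2 : H -> H) (hRB : RB_system cop eps S B1 B2)
  (A : comAlgType F) :
  image_of_ker_normal cop eps S B1 B2 A B1 B2 /\
  image_of_ker_normal cop eps S B1 B2 A B2 B1.
Proof.
case: hRB => hopf c1 c2 o1 o2 e1 e2.
by split; apply: main_gen.
Qed.
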